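(* Consider the following MIMO flat-fading model. Fix integers $l_{\mathrm t},l_{\mathrm r},n\ge1$, a known pilot matrix $S=[s_{t,k}]\in\mathbb{C}^{n\times l_{\mathrm t}}$, channel prior $\vec{\mathbf h}\sim\mathcal{CN}(\vec\mu_{\vec{\mathbf h}},\Sigma_{\vec{\mathbf h}})$ with $\Sigma_{\vec{\mathbf h}}$ positive definite, frequency offset prior $\mathbf f_\delta\sim\mathcal N(\mu_{\mathbf f_\delta},\sigma^2_{\mathbf f_\delta})$, and i.i.d. $\mathcal{CN}(0,1)$ noise, mutually independent, with observations $y_{r,k}=e^{j2\pi\mathbf f_\delta(k-1)}\sum_t s_{t,k}h_{r,t}+n_{r,k}$. For a given observation $\vec y$ and $k=1,\dots,n-1$ define $$z_k=\sum_{r,t}s_{t,k+1}y_{r,k+1}^*b_{r,t}+\sum_{k_1=k+1}^{n}\sum_{r_1,t_1,r_2,t_2}a_{r_1,t_1,r_2,t_2}\,s_{t_1,k_1}s^*_{t_2,k_1-k}\,y_{r_2,k_1-k}\,y^*_{r_1,k_1},$$ and write $z_k=r_ke^{-j\theta_k}$ with $r_k\ge0$, $\theta_k\in\mathbb R$. Then $$\frac{\partial g(\vec y,f_\delta)}{\partial f_\delta}=-4\pi\,\mathrm{Im}\Big[\sum_{k=1}^{n-1}e^{j2\pi f_\delta k}\,k\,r_ke^{-j\theta_k}\Big]-\sigma_{\mathbf f_\delta}^{-2}(f_\delta-\mu_{\mathbf f_\delta})=-4\pi\sum_{k=1}^{n-1}k\,r_k\sin\!\Big(2\pi k\Big(f_\delta-\frac{\theta_k}{2\pi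 k}\Big)\Big)-\sigma_{\mathbf f_\delta}^{-2}(f_\delta-\mu_{\mathbf f_\delta}),$$ and the optimal solution $f_\delta$ of the MAP frequency offset estimation problem $\max_{f_\delta}f_{\vec{\mathbf y}|\mathbf f_\delta}(\vec y|f_\delta)f_{\mathbf f_\delta}(f_\delta)$ (equivalently $\max_{f_\delta}g(\vec y,f_\delta)$) satisfies $\frac{\partial g(\vec y,f_\delta)}{\partial f_\delta}=0$.
   Context: Sums over $r,r_1,r_2$ range over $1..l_{\mathrm r}$ and over $t,t_1,t_2$ over $1..l_{\mathrm t}$; ${}^*$ is complex conjugation. $\vec{\mathbf h}$ stacks $h_{r,t}$ in position $(r-1)l_{\mathrm t}+t$; $\vec y$ stacks $y_{r,k}$ in position $(r-1)n+k$. $F(f)=\mathrm{diag}(e^{j2\pi f(k-1)})_{k=1..n}$, $X(f)=F(f)S$, $\grave X(f)=I_{l_{\mathrm r}}\otimes X(f)$, $\grave S=I_{l_{\mathrm r}}\otimes S$. $A=(\grave S^\dagger\grave S+\Sigma_{\vec{\mathbf h}}^{-1})^{-1}$ with $a_{r_1,t_1,r_2,t_2}$ its entry in row $(r_1-1)l_{\mathrm t}+t_1$ and column $(r_2-1)l_{\mathrm t}+t_2$; $\vec b=(I-A\grave S^\dagger\grave S)\vec\mu_{\vec{\mathbf h}}$ with $b_{r,t}$ its entry in position $(r-1)l_{\mathrm t}+t$. $g(\vec y,f_\delta)=2\,\mathrm{Re}[\vec b^\dagger\grave X(f_\delta)^\dagger\vec y]+(\grave X(f_\delta)^\dagger\vec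 y)^\dagger A(\grave X(f_\delta)^\dagger\vec y)-\frac12\sigma_{\mathbf f_\delta}^{-2}|f_\delta-\mu_{\mathbf f_\delta}|^2$. *)

(* Defs.v *)
From HB Require Import structures.
From mathcomp Require Import all_boot all_order all_algebra.
From mathcomp Require Import all_classical all_reals all_analysis.
From mathcomp Require Import complex mxtens.
Set Implicit Arguments. Unset Strict Implicit. Unset Printing Implicit Defensive.
Import Order.TTheory GRing.Theory Num.Theory.
Local Open Scope ring_scope.
Local Open Scope complex_scope.

Section Model.
Variable R : realType.
Local Notation C := R[i].

Definition expj (x : R) : C := cos x +i* sin x.

Definition ctmx m p (M : 'M[C]_(m, p)) : 'M[C]_(p, m) := (map_mx Num.conj M)^T.

Definition posdefmx N (M : 'M[C]_N) : Prop :=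
  ctmx M = M /\ forall x : 'cV[C]_N, x != 0 -> 0 < (ctmx x *m M *m x) 0 0.

(* stacking: entry (i, j) of Y goes to position i * p + j (0-based),
   i.e. (r-1) p + k in 1-based indexing; consistent with the Kronecker
   product tensmx. *)
Definition vecm m p (Y : 'M[C]_(m, p)) : 'cV[C]_(m * p) :=
  \col_q Y (mxtens_unindex q).1 (mxtens_unindex q).2.

Variables (lt lr n : nat).
(* S : n x l_t pilot matrix, S k t = s_{t,k} (0-based k) *)
Variable S : 'M[C]_(n, lt).
(* Mu r t = mu_{h_{r,t}}, the prior mean; vec h stacked as in vecm *)
Variable Mu : 'M[C]_(lr, lt).
Variable Sig : 'M[C]_(lr * lt).
Variables (muf sf : R).    (* prior mean and standard deviation of f_delta *)
Variable Y : 'M[C]_(lr, n). (* Y r k = y_{r,k} (0-based k) *)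

Definition Fmx (f : R) : 'M[C]_n := diag_mx (\row_(k < n) expj (2 * pi * f * (k : nat)%:R)).
Definition Xmx (f : R) : 'M[C]_(n, lt) := Fmx f *m S.
Definition Xg (f : R) : 'M[C]_(lr * n, lr * lt) := (1%:M : 'M[C]_lr) *t Xmx f.
Definition Sg : 'M[C]_(lr * n, lr * lt) := (1%:M : 'M[C]_lr) *t S.

Definition Amx : 'M[C]_(lr * lt) := invmx (ctmx Sg *m Sg + invmx Sig).
Definition bvec : 'cV[C]_(lr * lt) := (1%:M - Amx *m ctmx Sg *m Sg) *m vecm Mu.

Definition a_ (r1 : 'I_lr) (t1 : 'I_lt) (r2 : 'I_lr) (t2 : 'I_lt) : C :=
  Amx (mxtens_index (r1, t1)) (mxtens_index (r2, t2)).
Definition b_ (r : 'I_lr) (t : 'I_lt) : C := bvec (mxtens_index (r, t)) 0.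

(* g(y, f) ; the quadratic form (X^dag y)^dag A (X^dag y) is real since A is
   Hermitian, we take its real part to obtain a real-valued function *)
Definition gfun (f : R) : R :=
  let u := ctmx (Xg f) *m vecm Y in
  2 * complex.Re ((ctmx bvec *m u) 0 0)
  + complex.Re ((ctmx u *m Amx *m u) 0 0)
  - 2^-1 * sf ^- 2 * (f - muf) ^+ 2.

(* densities of the MAP problem:
   y | f_delta ~ CN(Xg f mu_h, Xg f Sigma Xg f^dag + I), f_delta ~ N(muf, sf^2) *)
Definition condcov (f : R) : 'M[C]_(lr * n) := Xg f *m Sig *m ctmx (Xg f) + 1%:M.
Definition lik (f : R) : R :=
  let d := vecm Y - Xg f *m vecm Mu in
  expR (- complex.Re ((ctmx d *m invmx (condcov f) *m d) 0 0))
  / (pi ^+ (lr * n) * complex.Re (\det (condcov f))).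
Definition prior (f : R) : R :=
  expR (- (f - muf) ^+ 2 / (2 * sf ^+ 2)) / Num.sqrt (2 * pi * sf ^+ 2).
Definition post (f : R) : R := lik f * prior f.

End Model.

Section Z.
Variable R : realType.
Local Notation C := R[i].
Variables (lt lr n : nat).
Variable S : 'M[C]_(n.+1, lt).
Variable Mu : 'M[C]_(lr, lt).
Variable Sig : 'M[C]_(lr * lt).
Variable Y : 'M[C]_(lr, n.+1).

(* z_k for 1 <= k <= n (paper: k = 1..n_paper-1 with n_paper = n.+1);
   all row indices below are 0-based: paper's s_{t,k+1} is S (k) t, etc. *)
Definition zk (k : nat) : C :=
  \sum_(r < lr) \sum_(t < lt)
     S (inord k) t * Num.conj (Y r (inord k)) * b_ S Mu Sig r t
  + \sum_(k1 < n.+1 | (k <= k1)%N)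
      \sum_(r1 < lr) \sum_(t1 < lt) \sum_(r2 < lr) \sum_(t2 < lt)
        a_ S Sig r1 t1 r2 t2 * S k1 t1 * Num.conj (S (inord (k1 - k)) t2)
        * Y r2 (inord (k1 - k)) * Num.conj (Y r1 k1).
End Z.

(* Main.v *)
Require Import Defs.
From HB Require Import structures.
From mathcomp Require Import all_boot all_order all_algebra.
From mathcomp Require Import all_classical all_reals all_analysis.
From mathcomp Require Import complex mxtens spectral sesquilinear.
From mathcomp Require Import ring lra.
Import Order.TTheory GRing.Theory Num.Theory.
Local Open Scope ring_scope.
Local Open Scope complex_scope.


Section Basic.
Variable R : realType.
Local Notation C := R[i].

Lemma ctmx_mul m p q (A : 'M[C]_(m, p)) (B : 'M[C]_(p, q)) :
  ctmx (A *m B) = ctmx B *m ctmx A.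
Proof. by rewrite /ctmx map_mxM trmx_mul. Qed.

Lemma ctmxK m p (A : 'M[C]_(m, p)) : ctmx (ctmx A) = A.
Proof.
apply/matrixP => i j; rewrite /ctmx !mxE; exact: conjCK.
Qed.

Lemma ctmxD m p (A B : 'M[C]_(m, p)) : ctmx (A + B) = ctmx A + ctmx B.
Proof. by apply/matrixP => i j; rewrite /ctmx !mxE rmorphD. Qed.

Lemma ctmxN m p (A : 'M[C]_(m, p)) : ctmx (- A) = - ctmx A.
Proof. by apply/matrixP => i j; rewrite /ctmx !mxE rmorphN. Qed.

Lemma ctmxB m p (A B : 'M[C]_(m, p)) : ctmx (A - B) = ctmx A - ctmx B.
Proof. by rewrite ctmxD ctmxN. Qed.

Lemma ctmxZ m p c (A : 'M[C]_(m, p)) : ctmx (c *: A) = Num.conj c *: ctmx A.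
Proof. by apply/matrixP => i j; rewrite /ctmx !mxE rmorphM. Qed.

Lemma ctmx_sum m p (I : Type) (s : seq I) (F : I -> 'M[C]_(m, p)) :
  ctmx (\sum_(i <- s) F i) = \sum_(i <- s) ctmx (F i).
Proof.
elim: s => [|x s IH]; first by rewrite !big_nil; apply/matrixP => i j; rewrite /ctmx !mxE rmorph0.
by rewrite !big_cons ctmxD IH.
Qed.

Lemma ctmx1 m : ctmx (1%:M : 'M[C]_m) = 1%:M.
Proof. by rewrite /ctmx map_mx1 trmx1. Qed.

Lemma ctmx_inv m (A : 'M[C]_m) : ctmx (invmx A) = invmx (ctmx A).
Proof. by rewrite /ctmx map_invmx trmx_inv. Qed.

Lemma ctmxE m p (A : 'M[C]_(m, p)) i j : ctmx A i j = Num.conj (A j i).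
Proof. by rewrite /ctmx !mxE. Qed.

Lemma Re_conj (z : C) : complex.Re (Num.conj z : C) = complex.Re z.
Proof. by case: z. Qed.
Lemma Im_conj (z : C) : complex.Im (Num.conj z : C) = - complex.Im z.
Proof. by case: z. Qed.
Lemma ReD (x y : C) : complex.Re (x + y) = complex.Re x + complex.Re y.
Proof. by case: x; case: y. Qed.
Lemma ImD (x y : C) : complex.Im (x + y) = complex.Im x + complex.Im y.
Proof. by case: x; case: y. Qed.
Lemma ReN (x : C) : complex.Re (- x) = - complex.Re x.
Proof. by case: x. Qed.
Lemma ImN (x : C) : complex.Im (- x) = - complex.Im x.
Proof. by case: x. Qed.
Lemma Re_sum (I : Type) (s : seq I) (F : I -> C) :
  complex.Re (\sum_(i <- s) F i) = \sum_(i <- s) complex.Re (F i).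
Proof. elim: s => [|x s IH]; by rewrite ?big_nil ?big_cons ?ReD ?IH. Qed.
Lemma Im_sum (I : Type) (s : seq I) (F : I -> C) :
  complex.Im (\sum_(i <- s) F i) = \sum_(i <- s) complex.Im (F i).
Proof. elim: s => [|x s IH]; by rewrite ?big_nil ?big_cons ?ImD ?IH. Qed.
Lemma Re_Mr (x : C) (r : R) : complex.Re (x * r%:C) = complex.Re x * r.
Proof. case: x => a b /=. by rewrite mulr0 subr0. Qed.
Lemma Im_Mr (x : C) (r : R) : complex.Im (x * r%:C) = complex.Im x * r.
Proof. case: x => a b /=. by rewrite mulr0 add0r. Qed.

Lemma Im_sumP (I : Type) (s : seq I) (P : pred I) (F : I -> C) :
  complex.Im (\sum_(i <- s | P i) F i) = \sum_(i <- s | P i) complex.Im (F i).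
Proof. by apply: (big_morph _ (@ImD) _). Qed.
Lemma Re_sumP (I : Type) (s : seq I) (P : pred I) (F : I -> C) :
  complex.Re (\sum_(i <- s | P i) F i) = \sum_(i <- s | P i) complex.Re (F i).
Proof. by apply: (big_morph _ (@ReD) _). Qed.
End Basic.


Section Tens.
Variable R : realType.
Local Notation C := R[i].

Lemma sum_tens m p (F : 'I_(m * p) -> C) :
  \sum_(q < m * p) F q = \sum_(a < m) \sum_(b < p) F (mxtens_index (a, b)).
Proof.
rewrite pair_big /=.
have H : {on [pred i | true], bijective (@mxtens_index m p)}.
  by exists (@mxtens_unindex m p) => i _; rewrite (mxtens_indexK, mxtens_unindexK).
rewrite (reindex _ H) /=.
by apply: eq_bigr => -[a b].
Qed.

Lemma sum_delta m (r : 'I_m) (G : 'I_m -> C) :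
  \sum_(a < m) (1%:M : 'M[C]_m) a r * G a = G r.
Proof.
rewrite (bigD1 r) //= big1 ?addr0; first by rewrite mxE eqxx mul1r.
by move=> a /negbTE har; rewrite mxE har mul0r.
Qed.
End Tens.

Section Trig.
Variable R : realType.
Local Notation C := R[i].

Lemma expjD (a b : R) : expj a * expj b = expj (a + b).
Proof.
rewrite /expj cosD sinD; apply/eqP; rewrite eq_complex /=; apply/andP; split; apply/eqP; ring.
Qed.

Lemma conj_expj (a : R) : Num.conj (expj a) = expj (- a).
Proof. by rewrite /expj cosN sinN. Qed.

Lemma expj0 : expj 0 = 1 :> C.
Proof. by rewrite /expj cos0 sin0. Qed.

Lemma Re_expjM (x : R) (c : C) :
  complex.Re (expj x * c) = cos x * complex.Re c + sin x * (- complex.Im c).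
Proof. case: c => a b /=; ring. Qed.

Lemma Im_expjM (x : R) (c : C) :
  complex.Im (expj x * c) = cos x * complex.Im c + sin x * complex.Re c.
Proof. case: c => a b /=; ring. Qed.

Lemma dlin (a x : R) : is_derive x 1 (fun y : R => a * y) a.
Proof.
have := is_deriveZ a (is_derive_id x (1:R)).
by rewrite /GRing.scale /= mulr1.
Qed.
Lemma dcos (a x : R) : is_derive x 1 (fun y : R => cos (a * y)) (- sin (a * x) * a).
Proof.
exact: (is_derive1_comp (f:=cos) (g:=fun y => a * y) (is_derive_cos (a*x)) (dlin a x)).
Qed.
Lemma dsin (a x : R) : is_derive x 1 (fun y : R => sin (a * y)) (cos (a * x) * a).
Proof.
exact: (is_derive1_comp (f:=sin) (g:=fun y => a * y) (is_derive_sin (a*x)) (dlin a x)).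
Qed.
Lemma dlc (f g : R -> R) (df dg p q x : R) : is_derive x 1 f df -> is_derive x 1 g dg ->
  is_derive x 1 (fun y => f y * p + g y * q) (df * p + dg * q).
Proof.
move=> hf hg.
have h1 := is_deriveM hf (is_derive_cst p x 1).
have h2 := is_deriveM hg (is_derive_cst q x 1).
have := is_deriveD h1 h2.
rewrite /GRing.scale /= !mulr0 !add0r => H.
have -> : (fun y => f y * p + g y * q) = (f * cst p + g * cst q)%R.
  by apply: funext => y.
by apply: is_derive_eq H _; rewrite mulrC [dg * _]mulrC.
Qed.

Lemma dRe (a : R) (c : C) (x : R) :
  is_derive x 1 (fun y => complex.Re (expj (a * y) * c)) (- a * complex.Im (expj (a * x) * c)).
Proof.
have -> : (fun y => complex.Re (expj (a * y) * c)) =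
   (fun y => cos (a * y) * complex.Re c + sin (a * y) * (- complex.Im c)).
  by apply: funext => y; rewrite Re_expjM.
have H := dlc _ _ _ _ (complex.Re c) (- complex.Im c) x (dcos a x) (dsin a x).
apply: is_derive_eq H _.
rewrite Im_expjM; ring.
Qed.

Lemma is_derive_sumf (I : Type) (s : seq I) (F : I -> R -> R) (dF : I -> R) (x : R) :
  (forall i, is_derive x 1 (F i) (dF i)) ->
  is_derive x 1 (fun y => \sum_(i <- s) F i y) (\sum_(i <- s) dF i).
Proof.
move=> H; elim: s => [|i s IH].
  have -> : (fun y => \sum_(i <- [::]) F i y) = cst 0 by apply: funext => y; rewrite big_nil.
  by rewrite big_nil; apply: is_derive_cst.
have -> : (fun y => \sum_(j <- i :: s) F j y) = (F i + (fun y => \sum_(j <- s) F j y))%R.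
  by apply: funext => y; rewrite big_cons.
by rewrite big_cons; apply: is_deriveD.
Qed.

Lemma dsq (m x : R) : is_derive x 1 (fun y => (y - m) ^+ 2) (2 * (x - m)).
Proof.
have h : is_derive x 1 (fun y => y - m) 1.
  have := is_deriveB (is_derive_id x (1:R)) (is_derive_cst m x 1).
  rewrite subr0 => H.
  have -> : (fun y => y - m) = (id - cst m)%R by apply: funext.
  exact: H.
have := is_deriveM h h.
rewrite /GRing.scale /= => H.
have -> : (fun y => (y - m) ^+ 2) = ((fun y => y - m) * (fun y => y - m))%R.
  by apply: funext => y; rewrite expr2.
by apply: is_derive_eq H _; ring.
Qed.

Lemma d3 (F1 F2 F3 : R -> R) (d1 d2 d3 p q x : R) :
  is_derive x 1 F1 d1 -> is_derive x 1 F2 d2 -> is_derive x 1 F3 d3 ->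
  is_derive x 1 (fun y => p * F1 y + F2 y - q * F3 y) (p * d1 + d2 - q * d3).
Proof.
move=> h1 h2 h3.
have := is_deriveB (is_deriveD (is_deriveZ p h1) h2) (is_deriveZ q h3).
rewrite /GRing.scale /= => H.
have -> : (fun y => p * F1 y + F2 y - q * F3 y) = (p \*: F1 + F2 - q \*: F3)%R.
  by apply: funext.
exact: H.
Qed.

End Trig.

Section Tri.
Variable R : realType.

Lemma tri_split N (T : nat -> nat -> R) :
  (forall i j, T i j = T j i) -> (forall i, T i i = 0) ->
  \sum_(i < N) \sum_(j < N) T i j = 2 * \sum_(i < N) \sum_(j < N | (j < i)%N) T i j.
Proof.
move=> Ts T0.
have E1 : forall i : 'I_N, \sum_(j < N) T i j =
    \sum_(j < N | (j < i)%N) T i j + \sum_(j < N | (i < j)%N) T i j.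
  move=> i; rewrite (bigID (fun j : 'I_N => (j < i)%N)) /=; congr (_ + _).
  rewrite (bigD1 i) /= ?ltnn // T0 add0r; apply: eq_bigl => j.
  by rewrite -leqNgt -val_eqE /= ltn_neqAle andbC eq_sym.
rewrite (eq_bigr _ (fun i _ => E1 i)) big_split /=.
have E2 : \sum_(i < N) \sum_(j < N | (i < j)%N) T i j =
          \sum_(i < N) \sum_(j < N | (j < i)%N) T i j.
  rewrite (eq_bigr (fun i : 'I_N => \sum_(j < N) if (i < j)%N then T i j else 0));
    last by move=> i _; rewrite big_mkcond.
  rewrite exchange_big /=; apply: congr_big => // i _.
  rewrite [RHS]big_mkcond; apply: eq_bigr => j _ /=.
  by rewrite Ts.
by rewrite E2 mulr_natl mulr2n.
Qed.


Lemma tri_inner N (G : nat -> R) (i : 'I_N) :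
  \sum_(j < N | (j < i)%N) G j = \sum_(k < N | (1 <= k <= i)%N) G (i - k)%N.
Proof.
case: N i G => [[]//|N] i G.
rewrite (reindex_onto (fun k : 'I_N.+1 => inord (i - k)) (fun j : 'I_N.+1 => inord (i - j))) /=.
  apply: congr_big => // [k|k _]; last by rewrite inordK // (leq_ltn_trans (leq_subr _ _)).
  case: k => k hk /=.
  have h1 : (i - k < N.+1)%N by rewrite (leq_ltn_trans (leq_subr _ _)).
  have h2 : (i - (i - k) < N.+1)%N by rewrite (leq_ltn_trans (leq_subr _ _)).
  rewrite -val_eqE /= (inordK h1) (inordK h2).
  case: (leqP k i) => hki.
    rewrite subKn // eqxx !andbT.
    case: k hk hki {h1 h2} => [|k] hk hki; first by rewrite subn0 ltnn.
    by rewrite ltn_subLR // addSn ltnS leq_addl.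
  have -> : (i - k = 0)%N by apply/eqP; rewrite subn_eq0 ltnW.
  by rewrite subn0 andbF (ltn_eqF hki) andbF.
move=> j hj; apply: val_inj => /=.
rewrite inordK ?(leq_ltn_trans (leq_subr _ _)) //.
rewrite inordK ?(leq_ltn_trans (leq_subr _ _)) //.
by rewrite subKn // ltnW.
Qed.

Lemma tri_reindex N (T : nat -> nat -> R) :
  \sum_(i < N) \sum_(j < N | (j < i)%N) T i j =
  \sum_(k < N | (1 <= k)%N) \sum_(i < N | (k <= i)%N) T i (i - k)%N.
Proof.
rewrite (eq_bigr _ (fun (i : 'I_N) _ => @tri_inner N (T i) i)).
rewrite (eq_bigr (fun i : 'I_N => \sum_(k < N) if (1 <= k <= i)%N then T i (i - k)%N else 0));
  last by move=> i _; rewrite big_mkcond.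
rewrite exchange_big /= [RHS]big_mkcond; apply: eq_bigr => k _ /=.
case: (leqP 1 k) => hk /=.
  by rewrite [RHS]big_mkcond.
by rewrite big1.
Qed.

End Tri.

Section Main.
Variable R : realType.
Local Notation C := R[i].
Variables (lt lr n : nat).
Variable S : 'M[C]_(n.+1, lt).
Variable Mu : 'M[C]_(lr, lt).
Variable Sig : 'M[C]_(lr * lt).
Variables (muf sf : R).
Variable Y : 'M[C]_(lr, n.+1).

Definition E (f : R) (k : nat) : C := expj (2 * pi * f * k%:R).
Definition vk (k : nat) : 'cV[C]_(lr * lt) :=
  \col_p (Num.conj (S (inord k) (mxtens_unindex p).2) * Y (mxtens_unindex p).1 (inord k)).
Definition uf (f : R) := ctmx (Xg lr S f) *m vecm Y.

Lemma u_sum f : uf f = \sum_(k < n.+1) Num.conj (E f k) *: vk k.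
Proof.
apply/matrixP => i j; rewrite [j]ord1 summxE /uf mxE sum_tens.
case: (mxtens_indexP i) => r t.
rewrite (eq_bigr (fun a => \sum_(b < n.+1) (1%:M : 'M[C]_lr) a r *
   (Num.conj (E f b) * Num.conj (S b t) * Y a b))); last first.
  move=> a _; apply: eq_bigr => b _.
  rewrite ctmxE /Xg tensmxE /Xmx /Fmx mul_diag_mx !mxE mxtens_indexK /= !rmorphM /=.
  by rewrite conjC_nat /E !mulrA.
rewrite exchange_big /=; apply: eq_bigr => k _.
rewrite (@sum_delta R _ r (fun a => (E f k)^* * (S k t)^* * Y a k)).
by rewrite !mxE mxtens_indexK /= inord_val mulrA.
Qed.

Lemma quad_expand m N (a : 'I_N -> C) (w : 'I_N -> 'cV[C]_m) (A : 'M[C]_m) :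
  (ctmx (\sum_k a k *: w k) *m A *m (\sum_k a k *: w k)) 0 0 =
  \sum_k1 \sum_k2 Num.conj (a k1) * a k2 * (ctmx (w k1) *m A *m w k2) 0 0.
Proof.
rewrite ctmx_sum !mulmx_suml summxE; apply: eq_bigr => k1 _.
rewrite mulmx_sumr summxE; apply: eq_bigr => k2 _.
by rewrite ctmxZ -!scalemxAl -scalemxAr !mxE mulrA.
Qed.

Lemma lin_expand m N (a : 'I_N -> C) (w : 'I_N -> 'cV[C]_m) (b : 'cV[C]_m) :
  (ctmx b *m (\sum_k a k *: w k)) 0 0 = \sum_k a k * (ctmx b *m w k) 0 0.
Proof.
rewrite mulmx_sumr summxE; apply: eq_bigr => k _.
by rewrite -scalemxAr mxE.
Qed.

Lemma conj00 m (x y : 'cV[C]_m) : Num.conj ((ctmx x *m y) 0 0) = (ctmx y *m x) 0 0.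
Proof. by rewrite -ctmxE ctmx_mul ctmxK. Qed.

Definition cN k := (ctmx (vk k) *m bvec S Mu Sig) 0 0.
Definition dN k1 k2 := (ctmx (vk k1) *m Amx S Sig *m vk k2) 0 0.

Lemma gfun_expand f : gfun S Mu Sig muf sf Y f =
  2 * complex.Re (\sum_(k < n.+1) E f k * cN k)
  + complex.Re (\sum_(k1 < n.+1) \sum_(k2 < n.+1) E f k1 * Num.conj (E f k2) * dN k1 k2)
  - 2^-1 * sf ^- 2 * (f - muf) ^+ 2.
Proof.
rewrite /gfun /= -/(uf f) u_sum lin_expand quad_expand.
congr (2 * _ + complex.Re _ - _).
  have -> : \sum_(k < n.+1) (E f k)^* * (ctmx (bvec S Mu Sig) *m vk k) 0 0
     = Num.conj (\sum_(k < n.+1) E f k * cN k).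
    rewrite rmorph_sum; apply: eq_bigr => k _.
    by rewrite rmorphM /= /cN conj00.
  by case: (\sum_(k < n.+1) E f k * cN k).
apply: eq_bigr => k1 _; apply: eq_bigr => k2 _.
by rewrite conjCK.
Qed.


Lemma Ek f (k : nat) : E f k = expj ((2 * pi * k%:R) * f).
Proof. by rewrite /E; congr expj; ring. Qed.

Lemma EE f (k1 k2 : nat) : E f k1 * Num.conj (E f k2) = expj ((2 * pi * (k1%:R - k2%:R)) * f).
Proof. by rewrite /E conj_expj expjD; congr expj; ring. Qed.

Definition gder f :=
  2 * (\sum_(k < n.+1) (- (2 * pi * k%:R)) * complex.Im (E f k * cN k))
  + \sum_(k1 < n.+1) \sum_(k2 < n.+1)
      (- (2 * pi * (k1%:R - k2%:R))) * complex.Im (E f k1 * Num.conj (E f k2) * dN k1 k2)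
  - 2^-1 * sf ^- 2 * (2 * (f - muf)).

Lemma gfun_derive (f : R) : is_derive f 1 (gfun S Mu Sig muf sf Y) (gder f).
Proof.
have -> : gfun S Mu Sig muf sf Y = fun y =>
   2 * (\sum_(k < n.+1) complex.Re (expj ((2 * pi * k%:R) * y) * cN k))
   + \sum_(k1 < n.+1) (\sum_(k2 < n.+1) complex.Re (expj ((2 * pi * (k1%:R - k2%:R)) * y) * dN k1 k2))
   - 2^-1 * sf ^- 2 * (y - muf) ^+ 2.
  apply: funext => y; rewrite gfun_expand Re_sum; congr (2 * _ + _ - _).
    by apply: eq_bigr => k _; rewrite Ek.
  rewrite Re_sum; apply: eq_bigr => k1 _; rewrite Re_sum; apply: eq_bigr => k2 _.
  by rewrite EE.
rewrite /gder; apply: d3; last exact: dsq.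
  apply: (is_derive_sumf R _ _ (fun (k : 'I_n.+1) y => complex.Re (expj ((2 * pi * k%:R) * y) * cN k)) _ f) => k.
  by rewrite Ek; apply: dRe.
apply: (is_derive_sumf R _ _ (fun (k1 : 'I_n.+1) y => \sum_(k2 < n.+1) complex.Re (expj ((2 * pi * (k1%:R - k2%:R)) * y) * dN k1 k2)) _ f) => k1.
apply: (is_derive_sumf R _ _ (fun (k2 : 'I_n.+1) y => complex.Re (expj ((2 * pi * (k1%:R - k2%:R)) * y) * dN k1 k2)) _ f) => k2.
by rewrite EE; apply: dRe.
Qed.

Lemma Amx_herm : ctmx Sig = Sig -> ctmx (Amx S Sig) = Amx S Sig.
Proof.
move=> hS; rewrite /Amx ctmx_inv ctmxD ctmx_mul ctmxK ctmx_inv hS.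
by [].
Qed.

Lemma dN_conj : ctmx Sig = Sig -> forall k1 k2, Num.conj (dN k1 k2) = dN k2 k1.
Proof.
move=> hS k1 k2; rewrite /dN -ctmxE !ctmx_mul ctmxK Amx_herm // mulmxA.
by [].
Qed.

Definition Tq f (i j : nat) : R :=
  (i%:R - j%:R) * complex.Im (E f i * Num.conj (E f j) * dN i j).

Lemma gder_eq : ctmx Sig = Sig -> forall f, gder f =
  - (4 * pi) * (\sum_(k < n.+1 | (1 <= k)%N) k%:R *
       complex.Im (E f k * (cN k + \sum_(k1 < n.+1 | (k <= k1)%N) dN k1 (k1 - k)%N)))
  - sf ^- 2 * (f - muf).
Proof.
move=> hS f; rewrite /gder.
have L : \sum_(k < n.+1) - (2 * pi * k%:R) * complex.Im (E f k * cN k) =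
    - (2 * pi) * \sum_(k < n.+1 | (1 <= k)%N) k%:R * complex.Im (E f k * cN k).
  rewrite (bigID (fun k : 'I_n.+1 => (1 <= k)%N)) /= [X in _ + X]big1 ?addr0; last first.
    by move=> k; rewrite -ltnNge ltnS leqn0 => /eqP ->; rewrite mulr0 oppr0 mul0r.
  by rewrite mulr_sumr; apply: eq_bigr => k _; ring.
have Q : \sum_(k1 < n.+1) \sum_(k2 < n.+1)
      (- (2 * pi * (k1%:R - k2%:R))) * complex.Im (E f k1 * Num.conj (E f k2) * dN k1 k2)
    = - (2 * pi) * (2 * \sum_(k < n.+1 | (1 <= k)%N) \sum_(i < n.+1 | (k <= i)%N)
          k%:R * complex.Im (E f k * dN i (i - k)%N)).
  transitivity (- (2 * pi) * \sum_(i < n.+1) \sum_(j < n.+1) Tq f i j).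
    rewrite mulr_sumr; apply: eq_bigr => i _; rewrite mulr_sumr; apply: eq_bigr => j _.
    rewrite /Tq; ring.
  rewrite tri_split; last 2 first.
  - move=> i j; rewrite /Tq.
    have -> : E f j * Num.conj (E f i) * dN j i = Num.conj (E f i * Num.conj (E f j) * dN i j).
      by rewrite !rmorphM /= conjCK (dN_conj hS) [E f j * _]mulrC.
    transitivity ((j%:R - i%:R) * (- complex.Im (E f i * Num.conj (E f j) * dN i j))); first ring.
    congr (_ * _); by case: (E f i * (E f j)^* * dN i j).
  - by move=> i; rewrite /Tq subrr mul0r.
  rewrite tri_reindex; congr (_ * (2 * _)).
  apply: eq_bigr => k hk; apply: eq_bigr => i hki.
  rewrite /Tq EE (natrB _ hki).
  have -> : (i%:R - (i%:R - k%:R)) = k%:R :> R by ring.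
  by rewrite -Ek.
rewrite L Q.
have -> : \sum_(k < n.+1 | (1 <= k)%N) k%:R *
       complex.Im (E f k * (cN k + \sum_(k1 < n.+1 | (k <= k1)%N) dN k1 (k1 - k)%N)) =
   \sum_(k < n.+1 | (1 <= k)%N) k%:R * complex.Im (E f k * cN k) +
   \sum_(k < n.+1 | (1 <= k)%N) \sum_(i < n.+1 | (k <= i)%N) k%:R * complex.Im (E f k * dN i (i - k)%N).
  rewrite -big_split /=; apply: eq_bigr => k _.
  by rewrite mulrDr ImD mulr_sumr Im_sumP mulrDr mulr_sumr.
by move: (sf ^- 2) => s; field.
Qed.

Lemma bilin m (x y : 'cV[C]_m) (A : 'M[C]_m) :
  (ctmx x *m A *m y) 0 0 = \sum_p \sum_q Num.conj (x p 0) * A p q * y q 0.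
Proof.
rewrite mxE; under eq_bigr do rewrite mxE mulr_suml.
rewrite exchange_big; apply: eq_bigr => p _; apply: eq_bigr => q _.
by rewrite ctmxE.
Qed.

Lemma zk_eq k : zk S Mu Sig Y k = cN k + \sum_(k1 < n.+1 | (k <= k1)%N) dN k1 (k1 - k)%N.
Proof.
rewrite /zk /cN /dN; congr (_ + _).
  rewrite mxE sum_tens; apply: eq_bigr => r _; apply: eq_bigr => t _.
  rewrite /b_ ctmxE; congr (_ * _).
  by rewrite !mxE mxtens_indexK /= rmorphM /= conjCK.
apply: eq_bigr => k1 _; rewrite bilin sum_tens; apply: eq_bigr => r1 _; apply: eq_bigr => t1 _.
rewrite sum_tens; apply: eq_bigr => r2 _; apply: eq_bigr => t2 _.
rewrite !mxE !mxtens_indexK /= rmorphM /= conjCK inord_val /a_.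
ring.
Qed.

Lemma sum1_ord (F : nat -> C) :
  \sum_(1 <= k < n.+1) F k = \sum_(k < n.+1 | (1 <= k)%N) F k.
Proof.
rewrite -big_mkord (big_ltn_cond (m:=0)) //=.
by rewrite [RHS]big_nat_cond [LHS]big_nat_cond; apply: eq_bigl => i; case: (1 <= i)%N; rewrite ?andbT ?andbF.
Qed.

Lemma part1_value (rk th : nat -> R) :
  (forall k : nat, (1 <= k <= n)%N -> zk S Mu Sig Y k = (rk k)%:C * expj (- th k)) ->
  forall f, complex.Im (\sum_(1 <= k < n.+1)
            expj (2 * pi * f * k%:R) * (k%:R)%:C * (rk k)%:C * expj (- th k))
  = \sum_(k < n.+1 | (1 <= k)%N) k%:R *
       complex.Im (E f k * (cN k + \sum_(k1 < n.+1 | (k <= k1)%N) dN k1 (k1 - k)%N)).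
Proof.
move=> hz f; rewrite sum1_ord Im_sumP; apply: eq_bigr => k hk.
rewrite -zk_eq.
have hkn : (1 <= k <= n)%N by rewrite hk -ltnS ltn_ord.
rewrite hz // /E.
have -> : expj (2 * pi * f * k%:R) * (k%:R)%:C * (rk k)%:C * expj (- th k) =
   (expj (2 * pi * f * k%:R) * ((rk k)%:C * expj (- th k))) * (k%:R)%:C.
  by rewrite -!mulrA; congr (_ * _); rewrite mulrC mulrA.
case: (expj (2 * pi * f * k%:R) * ((rk k)%:C * expj (- th k))) => a b /=.
ring.
Qed.

End Main.


Section Herm.
Variable R : realType.
Local Notation C := R[i].

Lemma cnorm_ge0 m (x : 'cV[C]_m) : 0 <= (ctmx x *m x) 0 0.
Proof.
rewrite mxE; apply: sumr_ge0 => p _; rewrite ctmxE mulrC; exact: mul_conjC_ge0.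
Qed.

Lemma cnorm_gt0 m (x : 'cV[C]_m) : x != 0 -> 0 < (ctmx x *m x) 0 0.
Proof.
move=> hx.
have [p hp] : exists p, x p 0 != 0.
  apply/existsP; apply: contraR hx; rewrite negb_exists => /forallP h.
  apply/eqP/matrixP => i j; rewrite [j]ord1 mxE; apply/eqP.
  by have := h i; rewrite negbK.
rewrite mxE (bigD1 p) //=; apply: ltr_pwDl.
  by rewrite ctmxE mulrC mul_conjC_gt0.
by apply: sumr_ge0 => q _; rewrite ctmxE mulrC; exact: mul_conjC_ge0.
Qed.

Lemma ctmx_eq0 m p (x : 'M[C]_(m, p)) : (ctmx x == 0) = (x == 0).
Proof.
apply/eqP/eqP => [h|->]; last by apply/matrixP => i j; rewrite ctmxE !mxE rmorph0.
by rewrite -[x]ctmxK h; apply/matrixP => i j; rewrite ctmxE !mxE rmorph0.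
Qed.

Lemma posdef_unit m (M : 'M[C]_m) : posdefmx M -> M \in unitmx.
Proof.
case=> _ hp; rewrite unitmxE unitfE; apply/negP => /det0P [v hv0 hv].
have hx : ctmx v != 0 by rewrite ctmx_eq0.
by have := hp _ hx; rewrite ctmxK hv mul0mx mxE ltxx.
Qed.

Lemma ctmx_tC m p (M : 'M[C]_(m, p)) : ctmx M = (M ^t* )%sesqui.
Proof. by rewrite /ctmx map_trmx. Qed.

Lemma det_posdef m (M : 'M[C]_m) : posdefmx M -> 0 < \det M.
Proof.
move=> hM; have [hH hp] := hM.
have hn : M \is normalmx.
  by apply/normalmxP; rewrite -ctmx_tC hH.
have /orthomx_spectralP hsp := hn.
set P := spectralmx M in hsp; set sp := spectral_diag M in hsp.
have Pu : P \is unitarymx by apply: spectral_unitarymx.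
have Punit : P \in unitmx by apply: unitarymx_unit.
have PPt : P *m ctmx P = 1%:M by rewrite ctmx_tC; apply/unitarymxP.
have hD : diag_mx sp = P *m M *m ctmx P.
  by rewrite {1}hsp !mulmxA mulmxV // mul1mx -mulmxA PPt mulmx1.
have -> : \det M = \prod_i sp 0 i.
  rewrite {1}hsp !det_mulmx det_inv det_diag mulrC mulrA mulrC mulrA.
  by rewrite mulfK // -unitfE -unitmxE.
apply: prodr_gt0 => i _.
have -> : sp 0 i = (ctmx (ctmx (row i P)) *m M *m ctmx (row i P)) 0 0.
  have hDi : diag_mx sp i i = (P *m M *m ctmx P) i i by rewrite hD.
  rewrite mxE eqxx mulr1n in hDi; rewrite hDi.
  rewrite ctmxK -row_mul [RHS]mxE mxE; apply: eq_bigr => q _.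
  by rewrite !ctmxE !mxE.
apply: hp; rewrite ctmx_eq0; apply/negP => /eqP h0.
have : (P *m ctmx P) i i = (1%:M : 'M[C]_m) i i by rewrite PPt.
rewrite !mxE eqxx mulr1n big1 => [/esym/eqP|q _]; first by rewrite oner_eq0.
have : row i P 0 q = 0 by rewrite h0 mxE.
by rewrite mxE => ->; rewrite mul0r.
Qed.

End Herm.


Section TensU.
Variable R : realType.
Local Notation C := R[i].

Lemma tens11 m p : (1%:M : 'M[C]_m) *t (1%:M : 'M[C]_p) = 1%:M.
Proof.
apply/matrixP => i j.
case: (mxtens_indexP i) => a b; case: (mxtens_indexP j) => c d.
rewrite tensmxE !mxE (inj_eq (can_inj (@mxtens_indexK m p))) xpair_eqE.
by case: (a == c); case: (b == d); rewrite /= ?mulr1 ?mulr0.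
Qed.

Lemma ctmx_tens m p q r (A : 'M[C]_(m, p)) (B : 'M[C]_(q, r)) :
  ctmx (A *t B) = ctmx A *t ctmx B.
Proof.
apply/matrixP => i j.
case: (mxtens_indexP i) => a b; case: (mxtens_indexP j) => c d.
by rewrite ctmxE !tensmxE !ctmxE rmorphM.
Qed.

Lemma Fmx_unitary N f : ctmx (Fmx N f) *m Fmx N f = 1%:M :> 'M[C]_N.
Proof.
rewrite /Fmx mul_mx_diag; apply/matrixP => i j; rewrite [LHS]mxE ctmxE !mxE.
case: (eqVneq j i) => [->|hji].
  by rewrite mulr1n conj_expj expjD addNr expj0.
by rewrite mulr0n rmorph0 mul0r.
Qed.

Lemma inv_uniq m (X Z : 'M[C]_m) : X *m Z = 1%:M -> invmx X = Z.
Proof.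
move=> h; have [uX _] := mulmx1_unit h.
by rewrite -[invmx X]mulmx1 -h mulmxA mulVmx // mul1mx.
Qed.

Definition rq m (x y : 'cV[C]_m) : R := complex.Re ((ctmx x *m y) 0 0).
Arguments rq {m}.

Lemma rqC m (x y : 'cV[C]_m) : rq x y = rq y x.
Proof. by rewrite /rq -conj00; case: ((ctmx y *m x) 0 0). Qed.

Lemma rqDl m (x x' y : 'cV[C]_m) : rq (x + x') y = rq x y + rq x' y.
Proof. by rewrite /rq ctmxD mulmxDl mxE; case: ((ctmx x *m y) 0 0); case: ((ctmx x' *m y) 0 0). Qed.

Lemma rqDr m (x y y' : 'cV[C]_m) : rq x (y + y') = rq x y + rq x y'.
Proof. by rewrite rqC rqDl !(rqC _ y) !(rqC _ y'). Qed.

Lemma rqNl m (x y : 'cV[C]_m) : rq (- x) y = - rq x y.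
Proof. by rewrite /rq ctmxN mulNmx mxE; case: ((ctmx x *m y) 0 0). Qed.

Lemma rqNr m (x y : 'cV[C]_m) : rq x (- y) = - rq x y.
Proof. by rewrite rqC rqNl rqC. Qed.

Lemma rqBl m (x x' y : 'cV[C]_m) : rq (x - x') y = rq x y - rq x' y.
Proof. by rewrite rqDl rqNl. Qed.

Lemma rqBr m (x y y' : 'cV[C]_m) : rq x (y - y') = rq x y - rq x y'.
Proof. by rewrite rqDr rqNr. Qed.

Lemma rq_adj m p (x : 'cV[C]_m) (H : 'M[C]_(m, p)) (y : 'cV[C]_p) :
  rq x (H *m y) = rq (ctmx H *m x) y.
Proof. by rewrite /rq ctmx_mul ctmxK mulmxA. Qed.

End TensU.
Arguments rq {R m}.

Section Post.
Variable R : realType.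
Local Notation C := R[i].
Variables (lt lr n : nat).
Variable S : 'M[C]_(n.+1, lt).
Variable Mu : 'M[C]_(lr, lt).
Variable Sig : 'M[C]_(lr * lt).
Variables (muf sf : R).
Variable Y : 'M[C]_(lr, n.+1).
Hypothesis hSig : posdefmx Sig.

Definition Uf f : 'M[C]_(lr * n.+1) := (1%:M : 'M[C]_lr) *t Fmx n.+1 f.
Local Notation Sgm := (Sg lr S).
Local Notation A := (Amx S Sig).
Definition Gm := ctmx Sgm *m Sgm.
Definition Mm := Sgm *m Sig *m ctmx Sgm + 1%:M.
Definition Wm := 1%:M - Sgm *m A *m ctmx Sgm.

Lemma U_unitary f : ctmx (Uf f) *m Uf f = 1%:M.
Proof. by rewrite /Uf ctmx_tens tensmx_mul ctmx1 mulmx1 Fmx_unitary tens11. Qed.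

Lemma U_unitary' f : Uf f *m ctmx (Uf f) = 1%:M.
Proof. exact: mulmx1C (U_unitary f). Qed.

Lemma Xg_eq f : Xg lr S f = Uf f *m Sgm.
Proof. by rewrite /Xg /Uf /Sg tensmx_mul mulmx1. Qed.

Lemma condcov_eq f : condcov S Sig f = Uf f *m Mm *m ctmx (Uf f).
Proof.
rewrite /condcov Xg_eq /Mm ctmx_mul mulmxDr mulmxDl mulmx1 U_unitary' !mulmxA.
by [].
Qed.

Lemma Sig_unit : Sig \in unitmx.
Proof. exact: posdef_unit hSig. Qed.

Lemma Sig_herm : ctmx Sig = Sig.
Proof. by case: hSig. Qed.

Lemma Pm_unit : (ctmx Sgm *m Sgm + invmx Sig) \in unitmx.
Proof.
rewrite unitmxE unitfE; apply/negP => /det0P [v hv0 hv].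
set x := ctmx v.
have hx : x != 0 by rewrite ctmx_eq0.
have h0 : (ctmx x *m (ctmx Sgm *m Sgm + invmx Sig) *m x) 0 0 = 0.
  by rewrite ctmxK hv mul0mx mxE.
move: h0; rewrite mulmxDr mulmxDl mxE.
set z := invmx Sig *m x.
have hxz : x = Sig *m z by rewrite /z mulKVmx // Sig_unit.
have hz : z != 0.
  by apply: contraNneq hx => hz0; rewrite hxz hz0 mulmx0.
have t1 : 0 <= (ctmx x *m (ctmx Sgm *m Sgm) *m x) 0 0.
  have -> : ctmx x *m (ctmx Sgm *m Sgm) *m x = ctmx (Sgm *m x) *m (Sgm *m x).
    by rewrite ctmx_mul !mulmxA.
  exact: cnorm_ge0.
have t2 : 0 < (ctmx x *m invmx Sig *m x) 0 0.
  have -> : ctmx x *m invmx Sig *m x = ctmx z *m Sig *m z.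
    rewrite {1}hxz ctmx_mul Sig_herm -/z -!mulmxA; congr (_ *m _).
  by case: hSig => _ /(_ z hz).
move=> /eqP; apply/negP; rewrite gt_eqF //.
by rewrite addrC; apply: ltr_pwDl.
Qed.

Lemma A_inv : (Gm + invmx Sig) *m A = 1%:M.
Proof. by rewrite /Amx /Gm mulmxV // Pm_unit. Qed.

Lemma MW : Mm *m Wm = 1%:M.
Proof.
have k1 : Sig *m Gm *m A + A = Sig.
  rewrite -{2}[A]mul1mx -(mulmxV Sig_unit) -!mulmxA -mulmxDr.
  by rewrite [ctmx Sgm *m _]mulmxA -mulmxDl A_inv mulmx1.
have k2 : Sgm *m Sig *m ctmx Sgm *m (Sgm *m A *m ctmx Sgm) + Sgm *m A *m ctmx Sgm
          = Sgm *m Sig *m ctmx Sgm.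
  transitivity (Sgm *m (Sig *m Gm *m A + A) *m ctmx Sgm); last by rewrite k1.
  by rewrite mulmxDr mulmxDl /Gm !mulmxA.
rewrite /Mm /Wm mulmxBr mulmx1 mulmxDl mul1mx k2.
by rewrite addrAC subrr add0r.
Qed.

Lemma inv_condcov f : invmx (condcov S Sig f) = Uf f *m Wm *m ctmx (Uf f).
Proof.
apply: inv_uniq; rewrite condcov_eq.
rewrite -!mulmxA [ctmx (Uf f) *m (Uf f *m _)]mulmxA U_unitary mul1mx.
by rewrite !mulmxA -[Uf f *m Mm *m Wm]mulmxA MW mulmx1 U_unitary'.
Qed.

Lemma det_condcov f : \det (condcov S Sig f) = \det Mm.
Proof.
rewrite condcov_eq !det_mulmx mulrC mulrA -det_mulmx U_unitary det1.
by rewrite mul1r.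
Qed.

Lemma Mm_posdef : posdefmx Mm.
Proof.
split.
  by rewrite /Mm ctmxD ctmx1 !ctmx_mul ctmxK Sig_herm mulmxA.
move=> x hx; rewrite /Mm mulmxDr mulmxDl mulmx1 mxE.
apply: ltr_wpDl; last exact: cnorm_gt0.
set w := ctmx Sgm *m x.
have -> : ctmx x *m (Sgm *m Sig *m ctmx Sgm) *m x = ctmx w *m Sig *m w.
  by rewrite /w ctmx_mul ctmxK !mulmxA.
case: (eqVneq w 0) => [->|hw]; first by rewrite mulmx0 mxE.
by apply: ltW; case: hSig => _ /(_ w hw).
Qed.

Lemma ReDet_gt0 : 0 < complex.Re (\det Mm).
Proof.
have := @det_posdef R _ _ Mm_posdef.
by rewrite ltcE => /andP[].
Qed.

Definition kap : R :=
  - rq (vecm Y) (vecm Y) - rq (Sgm *m vecm Mu) (Sgm *m vecm Mu)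
  + rq (Gm *m vecm Mu) (A *m (Gm *m vecm Mu)).

Lemma A_herm : ctmx A = A.
Proof. exact: (Amx_herm R lt lr n S Sig Sig_herm). Qed.

Lemma negQ f :
  - complex.Re ((ctmx (vecm Y - Xg lr S f *m vecm Mu) *m invmx (condcov S Sig f)
      *m (vecm Y - Xg lr S f *m vecm Mu)) 0 0)
  = gfun S Mu Sig muf sf Y f + 2^-1 * sf ^- 2 * (f - muf) ^+ 2 + kap.
Proof.
set d := vecm Y - Xg lr S f *m vecm Mu.
set y := vecm Y; set mu := vecm Mu; set U := Uf f.
set uu := ctmx (Xg lr S f) *m y.
have hg : gfun S Mu Sig muf sf Y f = 2 * rq (bvec S Mu Sig) uu + rq uu (A *m uu)
     - 2^-1 * sf ^- 2 * (f - muf) ^+ 2.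
  by rewrite /gfun /rq /= -/y -/uu -[ctmx uu *m A *m uu]mulmxA.
have hb : bvec S Mu Sig = mu - A *m (Gm *m mu).
  by rewrite /bvec mulmxBl mul1mx /Gm !mulmxA.
have huu : uu = ctmx Sgm *m (ctmx U *m y).
  by rewrite /uu Xg_eq ctmx_mul mulmxA.
set e := ctmx U *m d.
have he : e = ctmx U *m y - Sgm *m mu.
  by rewrite /e /d mulmxBr Xg_eq !mulmxA U_unitary mul1mx.
set s := ctmx Sgm *m e.
have hs : s = uu - Gm *m mu.
  by rewrite /s he mulmxBr huu /Gm [ctmx Sgm *m (Sgm *m _)]mulmxA.
have hQ : complex.Re ((ctmx d *m invmx (condcov S Sig f) *m d) 0 0) = rq e e - rq s (A *m s).
  rewrite -mulmxA -/(rq d _) inv_condcov -!mulmxA rq_adj -/e.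
  by rewrite /Wm mulmxBl mul1mx rqBr -!mulmxA [rq e (Sgm *m _)]rq_adj -/s.
have hee : rq e e = rq y y - 2 * rq mu uu + rq (Sgm *m mu) (Sgm *m mu).
  rewrite he rqBl !rqBr.
  have -> : rq (ctmx U *m y) (ctmx U *m y) = rq y y.
    by rewrite rq_adj ctmxK mulmxA U_unitary' mul1mx.
  have -> : rq (Sgm *m mu) (ctmx U *m y) = rq mu uu.
    by rewrite rqC rq_adj rqC huu.
  have -> : rq (ctmx U *m y) (Sgm *m mu) = rq mu uu.
    by rewrite rq_adj rqC huu.
  ring.
have hss : rq s (A *m s) = rq uu (A *m uu) - 2 * rq uu (A *m (Gm *m mu))
           + rq (Gm *m mu) (A *m (Gm *m mu)).
  rewrite hs mulmxBr rqBl !rqBr.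
  have -> : rq (Gm *m mu) (A *m uu) = rq uu (A *m (Gm *m mu)).
    by rewrite rq_adj A_herm rqC.
  ring.
rewrite hQ hee hss hg hb rqBl.
have -> : rq (A *m (Gm *m mu)) uu = rq uu (A *m (Gm *m mu)) by rewrite rqC.
rewrite /kap -/y -/mu.
ring.
Qed.

Hypothesis hsf : 0 < sf.

Lemma post_exp : exists K : R, 0 < K /\
  forall f, post S Mu Sig muf sf Y f = K * expR (gfun S Mu Sig muf sf Y f).
Proof.
set D := pi ^+ (lr * n.+1) * complex.Re (\det Mm).
set sq := Num.sqrt (2 * pi * sf ^+ 2).
have hD : 0 < D by rewrite /D mulr_gt0 ?exprn_gt0 ?pi_gt0 ?ReDet_gt0.
have hsq : 0 < sq.
  by rewrite /sq sqrtr_gt0 !mulr_gt0 ?exprn_gt0 ?pi_gt0.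
exists (expR kap / (D * sq)); split.
  by apply: divr_gt0; [exact: expR_gt0 | exact: mulr_gt0].
move=> f.
rewrite /post /lik /prior negQ det_condcov -/D -/sq.
set q := 2^-1 * sf ^- 2 * (f - muf) ^+ 2.
have -> : - (f - muf) ^+ 2 / (2 * sf ^+ 2) = - q.
  rewrite /q; field; by rewrite gt_eqF.
move: (gfun S Mu Sig muf sf Y f) (kap) => g k.
rewrite expRN !expRD.
have h1 : expR q != 0 by rewrite gt_eqF ?expR_gt0.
have h2 : D != 0 by rewrite gt_eqF.
have h3 : sq != 0 by rewrite gt_eqF.
move: h1; move: (expR q) (expR g) (expR k) => eq eg ek h1.
clearbody D sq.
field.
by rewrite h1 h2 h3.
Qed.

End Post.


Section Fin.
Variable R : realType.

Lemma fermat (g : R -> R) (f : R) :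
  (forall x, derivable g x 1) -> (forall x, g x <= g f) -> derive1 g f = 0.
Proof.
move=> hd hm.
have H : is_derive f 1 g 0.
  apply: (@derive1_at_max R g (f - 1) (f + 1) f).
  - lra.
  - by move=> t _; exact: hd.
  - rewrite in_itv /=; apply/andP; split; lra.
  - by move=> t _; exact: hm.
by rewrite derive1E; apply: derive_val.
Qed.

Lemma part1b (n : nat) (rk th : nat -> R) (f : R) :
  complex.Im (\sum_(1 <= k < n.+1)
            expj (2 * pi * f * k%:R) * (k%:R)%:C * (rk k)%:C * expj (- th k))
  = \sum_(1 <= k < n.+1) k%:R * rk k * sin (2 * pi * k%:R * (f - th k / (2 * pi * k%:R))).
Proof.
rewrite Im_sumP; apply: eq_big_nat => k /andP[hk _].
have -> : expj (2 * pi * f * k%:R) * (k%:R)%:C * (rk k)%:C * expj (- th k) =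
   (expj (2 * pi * f * k%:R) * expj (- th k)) * (k%:R * rk k)%:C.
  by rewrite rmorphM /=; ring.
rewrite expjD /expj /=.
have -> : 2 * pi * k%:R * (f - th k / (2 * pi * k%:R)) = 2 * pi * f * k%:R + - th k.
  have hk0 : (k%:R : R) != 0 by rewrite pnatr_eq0 -lt0n.
  have hp : pi != 0 :> R by apply/lt0r_neq0/pi_gt0.
  move: hp; generalize (pi : R) => p hp.
  by field; rewrite hk0 hp.
ring.
Qed.

End Fin.

Theorem theorem3 (R : realType) (lt lr n : nat)
  (S : 'M[R[i]]_(n.+1, lt.+1)) (Mu : 'M[R[i]]_(lr.+1, lt.+1))
  (Sig : 'M[R[i]]_(lr.+1 * lt.+1)) (muf sf : R)
  (Y : 'M[R[i]]_(lr.+1, n.+1)) (rk th : nat -> R) :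
  posdefmx Sig -> 0 < sf ->
  (forall k : nat, (1 <= k <= n)%N ->
     0 <= rk k /\ zk S Mu Sig Y k = (rk k)%:C * expj (- th k)) ->
  (forall f : R,
     is_derive f 1 (gfun S Mu Sig muf sf Y)
       (- (4 * pi) * complex.Im (\sum_(1 <= k < n.+1)
            expj (2 * pi * f * k%:R) * (k%:R)%:C * (rk k)%:C * expj (- th k))
        - sf ^- 2 * (f - muf))
     /\
     - (4 * pi) * complex.Im (\sum_(1 <= k < n.+1)
            expj (2 * pi * f * k%:R) * (k%:R)%:C * (rk k)%:C * expj (- th k))
        - sf ^- 2 * (f - muf)
     = - (4 * pi) * (\sum_(1 <= k < n.+1)
            k%:R * rk k * sin (2 * pi * k%:R * (f - th k / (2 * pi * k%:R))))
        - sf ^- 2 * (f - muf))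
  /\
  (forall f : R, (forall f' : R, post S Mu Sig muf sf Y f' <= post S Mu Sig muf sf Y f) ->
     derive1 (gfun S Mu Sig muf sf Y) f = 0)
  /\
  (forall f : R, (forall f' : R, gfun S Mu Sig muf sf Y f' <= gfun S Mu Sig muf sf Y f) ->
     derive1 (gfun S Mu Sig muf sf Y) f = 0).
Proof.
move=> hSig hsf hz.
have hS : ctmx Sig = Sig by case: hSig.
have hz' : forall k : nat, (1 <= k <= n)%N -> zk S Mu Sig Y k = (rk k)%:C * expj (- th k).
  by move=> k hk; case: (hz k hk).
have hder : forall x, derivable (gfun S Mu Sig muf sf Y) x 1.
  move=> x; have := gfun_derive R _ _ _ S Mu Sig muf sf Y x.
  by case.
split.
  move=> f; split; last by rewrite part1b.
  apply: is_derive_eq; first exact: (gfun_derive R _ _ _ S Mu Sig muf sf Y f).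
  by rewrite gder_eq // (part1_value R _ _ _ S Mu Sig Y _ _ hz').
split; last by move=> f hm; apply: fermat.
move=> f hm; apply: fermat => // f'.
have [K [hK hp]] := post_exp R _ _ _ S Mu Sig muf sf Y hSig hsf.
by have := hm f'; rewrite !hp ler_pM2l // ler_expR.
Qed.
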